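(* Let $G$ be a graph and $v$ a vertex of $G$. Then $v$ is always-activated if and only if $v$ is $\mathbf{c}_v$-always-activated, i.e. if and only if $v$ is fixed, $\mathbf{c}_v$ is solvable, and $\mathbf{p}(v)=1$ for every pattern $\mathbf{p}$ with $N(G)\mathbf{p}=\mathbf{c}_v$.
   Context: For a finite simple graph $G$ with vertex set $\{v_1,\dots,v_n\}$, the closed adjacency matrix $N(G)$ is the $n\times n$ matrix over $\mathbb{Z}_2$ whose $(i,j)$ entry is $1$ iff $i=j$ or $v_i$ is adjacent to $v_j$. Vectors in $\mathbb{Z}_2^{V(G)}$ are patterns/configurations; $\mathbf{p}$ solves $\mathbf{c}$ if $N(G)\mathbf{p}=\mathbf{c}$, and $\mathbf{c}$ is solvable if it has a solving pattern. Null patterns are elements of $\operatorname{Ker}(N(G))$. $\mathbf{1}$ is the all-ones configuration (always solvable); $\mathbf{c}_v$ is the configuration with $\mathbf{c}_v(x)=1$ iff $x=v$. A vertex $v$ is half-activated if $\boldsymbol{\ell}(v)=1$ for some null pattern $\boldsymbol{\ell}$, and fixed otherwise. A fixed vertex $v$ is always-activated if $\mathbf{p}(v)=1$ for every $\mathbf{p}$ with $N(G)\mathbf{p}=\mathbf{1}$. For a solvable configuration $\mathbf{c}$, a fixed vertex $v$ is $\mathbf{c}$-always-activated if $\mathbf{p}(v)=1$ for every $\mathbf{p}$ with $N(G)\mathbf{p}=\mathbf{c}$. *)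

(* Defs.v *)
From mathcomp Require Import all_boot all_order all_algebra.
Set Implicit Arguments. Unset Strict Implicit. Unset Printing Implicit Defensive.
Import GRing.Theory.
Local Open Scope ring_scope.

Definition simple_graph (n : nat) (adj : rel 'I_n) : Prop :=
  symmetric adj /\ irreflexive adj.

Definition closedN (n : nat) (adj : rel 'I_n) : 'M['F_2]_n :=
  \matrix_(i, j) (((i == j) || adj i j) : nat)%:R.

Definition solves n (adj : rel 'I_n) (p c : 'cV['F_2]_n) : Prop :=
  closedN adj *m p = c.

Definition solvable n (adj : rel 'I_n) (c : 'cV['F_2]_n) : Prop :=
  exists p, solves adj p c.

Definition null_pattern n (adj : rel 'I_n) (l : 'cV['F_2]_n) : Prop :=
  closedN adj *m l = 0.

Definition all_ones (n : nat) : 'cV['F_2]_n := const_mx 1.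

Definition cvec n (v : 'I_n) : 'cV['F_2]_n := \col_x ((x == v) : nat)%:R.

Definition half_activated n (adj : rel 'I_n) (v : 'I_n) : Prop :=
  exists l, null_pattern adj l /\ l v 0 = 1.

Definition fixed_vertex n (adj : rel 'I_n) (v : 'I_n) : Prop :=
  ~ half_activated adj v.

Definition always_activated n (adj : rel 'I_n) (v : 'I_n) : Prop :=
  fixed_vertex adj v /\ forall p, solves adj p (all_ones n) -> p v 0 = 1.

Definition c_always_activated n (adj : rel 'I_n) (c : 'cV['F_2]_n) (v : 'I_n)
  : Prop :=
  solvable adj c /\ fixed_vertex adj v /\
  forall p, solves adj p c -> p v 0 = 1.

(* Main.v *)
Require Import Defs.
From mathcomp Require Import all_boot all_order all_algebra ring.
Import GRing.Theory.
Local Open Scope ring_scope.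
Set Implicit Arguments.

Lemma F2dbl (x : 'F_2) : x + x = 0.
Proof. by case: x => [[|[|k]]] //= ? ; apply/val_inj. Qed.
Lemma F2sq (x : 'F_2) : x * x = x.
Proof. by case: x => [[|[|k]]] //= ? ; apply/val_inj. Qed.
Lemma F2n1 (x : 'F_2) : x != 1 -> x = 0.
Proof. by case: x => [[|[|k]]] //= ? ; rewrite ?eqxx //; move=> _; apply/val_inj. Qed.

Section S.
Variables (n : nat) (adj : rel 'I_n).
Hypothesis sg : simple_graph adj.

Lemma Nsym i j : closedN adj i j = closedN adj j i.
Proof. by case: sg => sy _; rewrite !mxE eq_sym sy. Qed.

Lemma bil (x y : 'cV['F_2]_n) :
  \sum_i x i 0 * (closedN adj *m y) i 0 = \sum_i y i 0 * (closedN adj *m x) i 0.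
Proof.
under eq_bigr => i _ do rewrite mxE big_distrr.
rewrite exchange_big; apply: eq_bigr => j _; rewrite mxE big_distrr.
apply: eq_bigr => i _; rewrite Nsym; by rewrite /= mulrCA [RHS]mulrCA [x i 0 * _]mulrC.
Qed.

Lemma quad (q : 'cV['F_2]_n) :
  \sum_i q i 0 * (closedN adj *m q) i 0 = \sum_i q i 0.
Proof.
case: sg => sy irr.
pose a i j := q i 0 * (adj i j : nat)%:R * q j 0.
have E : forall i, q i 0 * (closedN adj *m q) i 0 =
   q i 0 + \sum_j (a i j * (j < i)%N%:R + a i j * (i < j)%N%:R).
  move=> i; rewrite mxE big_distrr (bigD1 i) //= mxE eqxx /= mulr1n mul1r F2sq.
  congr (_ + _); rewrite [RHS](bigD1 i) //= /a irr /= !ltnn ?(mulr0n, mulr0, mul0r, add0r).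
  apply: eq_bigr => j Hj; rewrite mxE eq_sym (negbTE Hj) /= mulrA.
  have [lt|gt|eq] := ltngtP j i; last by move: Hj; rewrite (val_inj eq) eqxx.
  - rewrite /= ?(mulr1n, mulr0n, mulr1, mulr0, addr0, add0r); reflexivity.
  - rewrite /= ?(mulr1n, mulr0n, mulr1, mulr0, addr0, add0r); reflexivity.
under eq_bigr => i _ do rewrite E.
rewrite big_split /= -[RHS]addr0; congr (_ + _).
under eq_bigr => i _ do rewrite big_split /=.
rewrite big_split /= exchange_big /=.
rewrite [X in X + _ = _](eq_bigr (fun j => \sum_i a j i * (j < i)%N%:R)) ?F2dbl //.
move=> j _; apply: eq_bigr => i _; rewrite /a sy; congr (_ * _).
rewrite mulrAC [RHS]mulrAC [q i 0 * q j 0]mulrC; reflexivity.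
Qed.

Lemma solv_orth (c : 'cV['F_2]_n) :
  (forall l, null_pattern adj l -> \sum_i c i 0 * l i 0 = 0) -> solvable adj c.
Proof.
move=> H.
have Hc : c^T *m cokermx (closedN adj) = 0.
  apply/matrixP => i j; rewrite !mxE.
  have Hn : null_pattern adj (col j (cokermx (closedN adj))).
    by rewrite /null_pattern colE mulmxA mulmx_coker mul0mx.
  rewrite -[RHS](H _ Hn) (ord1 i); apply: eq_bigr => k _; by rewrite !mxE.
have /submxP [D HD] : (c^T <= closedN adj)%MS by rewrite submxE Hc.
exists D^T; rewrite /solves.
have NT : (closedN adj)^T = closedN adj by apply/matrixP => a b; rewrite mxE Nsym.
by rewrite -NT -trmx_mul -HD trmxK.
Qed.

Lemma key (v : 'I_n) (p q : 'cV['F_2]_n) :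
  solves adj p (all_ones n) -> solves adj q (cvec v) -> p v 0 = q v 0.
Proof.
move=> Hp Hq.
have -> : p v 0 = \sum_i p i 0 * (closedN adj *m q) i 0.
  rewrite Hq (bigD1 v) //= big1 ?addr0; first by rewrite mxE eqxx mulr1.
  by move=> i Hi; rewrite mxE (negbTE Hi) mulr0.
rewrite bil Hp.
have -> : q v 0 = \sum_i q i 0 * (closedN adj *m q) i 0.
  rewrite Hq (bigD1 v) //= big1 ?addr0; first by rewrite mxE eqxx mulr1.
  by move=> i Hi; rewrite mxE (negbTE Hi) mulr0.
by rewrite quad; apply: eq_bigr => i _; rewrite mxE mulr1.
Qed.

End S.

Theorem proposition2p5 (n : nat) (adj : rel 'I_n) (v : 'I_n) :
  simple_graph adj ->
  (always_activated adj v <-> c_always_activated adj (cvec v) v).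
Proof.
move=> sg.
have ones : solvable adj (all_ones n).
  apply: (solv_orth sg) => l Hl.
  under eq_bigr => i _ do rewrite mxE mul1r.
  rewrite -(quad sg l) Hl; apply: big1 => i _; by rewrite mxE mulr0.
split.
- case=> fx H.
  have sv : solvable adj (cvec v).
    apply: (solv_orth sg) => l Hl.
    rewrite (bigD1 v) //= big1 ?addr0.
      rewrite mxE eqxx mul1r; apply: F2n1; apply/negP => /eqP E.
      by apply: fx; exists l.
    by move=> i Hi; rewrite mxE (negbTE Hi) mul0r.
  split=> //; split=> // q Hq.
  case: ones => p Hp; rewrite -(key sg Hp Hq); exact: H.
- case=> [[q Hq] [fx H]]; split=> // p Hp.
  by rewrite (key sg Hp Hq); apply: H.
Qed.
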